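(* If $Z$ is an integer-valued random variable with finite variance $\sigma_Z^2$, then $$\sup_{n\in\mathbb Z}P(Z=n)\ge\frac{1}{6\sigma_Z+4}.$$ *)

(* Defs.v *)
From HB Require Import structures.
From mathcomp Require Import all_boot all_order all_algebra.
From mathcomp Require Import all_classical all_reals all_analysis.

(* Main.v *)
Require Import Defs.
From HB Require Import structures.
From mathcomp Require Import all_boot all_order all_algebra.
From mathcomp Require Import all_classical all_reals all_analysis.
From mathcomp Require Import lra zify.
Import Order.TTheory GRing.Theory Num.Theory.
Local Open Scope classical_set_scope.
Local Open Scope ring_scope.

Theorem lemma5p6 (d : measure_display) (T : measurableType d) (R : realType)
    (P : probability T R) (Z : {RV P >-> R})
    (Zint : forall t, exists n : int, Z t = n%:~R)
    (Z2 : (Z : T -> R) \in Lfun P 2%:E) :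
  (((6 * Num.sqrt (fine ('V_P[Z])) + 4)^-1)%:E <=
    ereal_sup [set P (Z @^-1` [set (n%:~R : R)]) | n in [set: int]])%E.
Proof.
set M := ereal_sup _.
have Vfin := variance_fin_num Z2.
set v := fine 'V_P[Z].
have v0 : 0 <= v by apply: fine_ge0; exact: variance_ge0.
have VE : 'V_P[Z] = v%:E by rewrite fineK.
set s := Num.sqrt v.
have s0 : 0 <= s := sqrtr_ge0 v.
have ss : s ^+ 2 = v := sqr_sqrtr v0.
set mu := fine 'E_P[Z].
set a : R := 2 * s + 2^-1.
have a0 : 0 < a by rewrite /a; lra.
set k := Num.floor (mu - a).
set f := Num.floor (2 * a).
have f0 : 0 <= f by rewrite floor_ge0; lra.
pose m := (`|f|%N + 2)%N.
have Mub n : (P (Z @^-1` [set (n%:~R : R)]) <= M)%E.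
  by apply: ereal_sup_ubound; exists n.
have M0 : (0 <= M)%E by apply: le_trans (Mub 0%R); exact: measure_ge0.
have M1 : (M <= 1)%E.
  apply: ge_ereal_sup => _ [n _ <-].
  exact: probability_le1 (measurable_funPTI _ (measurable_set1 _)).
have Mfin : M \is a fin_num by rewrite ge0_fin_numE // (le_lt_trans M1) ?ltey.
set r := fine M.
have ME : M = r%:E by rewrite fineK.
have r0 : 0 <= r by rewrite -lee_fin -ME.
pose S (j : nat) := [set x : R | exists2 i : nat, (i < j)%N & x = (k + i%:Z)%:~R].
have SU j : S j.+1 = S j `|` [set (k + j%:Z)%:~R].
  apply/seteqP; split => x /=.
    move=> [i]; rewrite ltnS leq_eqVlt => /orP[/eqP -> ->|ij ->]; first by right.
    by left; exists i.
  by move=> [[i ij ->]|->]; [exists i => //; apply: ltnW|exists j].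
have S0 : S 0%N = set0 by apply/seteqP; split => x // [].
have mS j : measurable (S j).
  elim: j => [|j IH]; first by rewrite S0.
  by rewrite SU; apply: measurableU => //; exact: measurable_set1.
have PS j : (P (Z @^-1` S j) <= (j%:R * r)%:E)%E.
  elim: j => [|j IH]; first by rewrite S0 preimage_set0 measure0 mul0r.
  rewrite SU preimage_setU.
  apply: le_trans (measureU2 _ _ _) _.
  - exact: measurable_funPTI.
  - exact: measurable_funPTI (measurable_set1 _).
  rewrite -[(k + j%:Z)%:~R]/((k + j%:Z)%:~R : R).
  rewrite mulrSr mulrDl mul1r EFinD -ME.
  by apply: leeD => //; exact: Mub.
pose C := Z @^-1` `](mu - a), (mu + a)[%classic.
have mC : measurable C by exact: measurable_funPTI (measurable_itv _).
have CS : C `<=` Z @^-1` S m.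
  move=> t; rewrite /C /= in_itv /= => /andP[h1 h2].
  have [n Zn] := Zint t.
  rewrite Zn in h1 h2 *.
  have hk1 := floor_le (mu - a).
  have hk2 := floorD1_gt (mu - a).
  have hf2 := floorD1_gt (2 * a).
  rewrite -/k -/f intrD in hk1 hk2 hf2 *.
  rewrite intrD in hf2.
  have kn : k < n by rewrite -(ltr_int R); lra.
  have nk : n - k < f + 2.
    by rewrite -(ltr_int R) !intrD intrN; lra.
  exists `|n - k|%N.
    rewrite /m -ltz_nat PoszD !abszE !ger0_norm // ?subr_ge0 ?(ltW kn) //.
  congr (_%:~R); rewrite abszE ger0_norm; last by rewrite subr_ge0 ltW.
  by rewrite addrCA subrr addr0.
have ch := chebyshev Z a0.
rewrite VE -/mu in ch.
have CC : ~` C = [set x | a <= `|Z x - mu|].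
  apply/seteqP; split => x /=; rewrite /C /= in_itv /=.
    by move/negP; rewrite -ltr_distlC leNgt distrC.
  by rewrite leNgt distrC ltr_distlC => /negP.
have av : a ^- 2 * v <= 4^-1.
  rewrite mulrC -[v / _]/(v * (a ^+ 2)^-1) ler_pdivrMr ?exprn_gt0 //.
  rewrite -ss /a; nra.
have PC : (P C >= (3 / 4)%:E)%E.
  have := probability_setC P mC.
  rewrite CC => h.
  have PCfin : P C \is a fin_num.
    by rewrite ge0_fin_numE ?measure_ge0 // (le_lt_trans (probability_le1 P mC)) ?ltey.
  rewrite -(fineK PCfin) lee_fin.
  have ch' : (P [set x | (a <= `|Z x - mu|)%R] <= 4^-1%:E)%E.
    by apply: le_trans ch _; rewrite -EFinM lee_fin.
  move: ch'; rewrite h -(fineK PCfin) -EFinB lee_fin; lra.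
have PCm := le_trans PC (le_trans (le_measure _ _ _ CS) (PS m)).
rewrite ?inE in PCm.
have := PCm mC (measurable_funPTI _ (mS m)).
rewrite lee_fin ME lee_fin => hm.
have mR : m%:R <= 4 * s + 3 :> R.
  rewrite /m natrD natr_absz ger0_norm // -/a.
  have := floor_le (2 * a); rewrite -/f /a; lra.
have h1 : 0 <= (4 * s + 3 - m%:R) * r by apply: mulr_ge0 => //; lra.
have h2 : 0 <= s * r by apply: mulr_ge0.
rewrite -[_^-1]mulr1 ler_pdivrMl; last by lra.
lra.
Qed.
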